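(* Fix $N$, the graph $\mathcal G$, the vectors $C_1,\dots,C_N$, the attack bound $s$, and the noise bounds $b_w,b_v$. Then the following are equivalent: (i) there exists $\varepsilon>0$ such that for every $A\in\mathbb R^{n\times n}$ with $\|A\|\in[1,1+\varepsilon)$ there exist reals $\beta>0$, $\eta_0>0$ and an integer $L>\frac{\ln\|A\|}{\ln\gamma^{-1}}$ with $\eta_0(1-F(\eta_0))\ge q_0$ (where $F$ and $q_0$ are computed from these $A,\beta,L,\eta_0$); (ii) $\lambda_0>s$.
   Context: $C_i\in\mathbb R^{1\times n}$ with $\|C_i\|=1$, $i\in\mathcal V=\{1,\dots,N\}$; $\|\cdot\|$ is the Euclidean norm / induced 2-norm. $\mathcal G$ is an undirected connected graph on $\mathcal V$ without self-loops with Laplacian $\mathcal L$ (degree matrix minus adjacency matrix), whose second smallest and largest eigenvalues are $\lambda_2(\mathcal L),\lambda_{\max}(\mathcal L)$. $s$ is a nonnegative integer (upper bound on the number of attacked sensors), $b_w,b_v\ge0$. Notation: $\lambda_0=\min_{\mathcal J\subset\mathcal V,|\mathcal J|=N-s}\lambda_{\min}(\sum_{i\in\mathcal J}C_i^TC_i)$; $\gamma=\frac{\lambda_{\max}(\mathcal L)-\lambda_2(\mathcal L)}{\lambda_{\max}(\mathcal L)+\lambda_2(\mathcal L)}$; $p_0=\frac{\sqrt N\beta\gamma^L}{1-\|A\|\gamma^L}$; $k^*(\rho)=\min\{1,\frac{\beta}{\|A\|(p_0+\rho)+b_w+b_v}\}$; $F(\rho)=\|A\|(1-\frac{k^*(\rho)}{N}\lambda_0)$;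 $q_0=\frac{N-s}{N}(b_w+b_v+\|A\|p_0)+b_w+\frac{s\beta}{N}$. *)

(* Defs.v *)
From HB Require Import structures.
From mathcomp Require Import all_boot all_order all_algebra.
From mathcomp Require Import all_classical all_reals.
From mathcomp Require Import exp.
Set Implicit Arguments. Unset Strict Implicit. Unset Printing Implicit Defensive.
Import Order.TTheory GRing.Theory Num.Theory.
Local Open Scope ring_scope.
Local Open Scope classical_set_scope.

Section Defs.
Variable R : realType.

Definition enorm (m k : nat) (x : 'M[R]_(m, k)) : R :=
  Num.sqrt (\sum_i \sum_j x i j ^+ 2).

Definition opnorm (n : nat) (A : 'M[R]_n) : R :=
  sup [set enorm (A *m x) | x in [set x : 'cV[R]_n | enorm x = 1]].

(* Eigenvalues with multiplicity, sorted increasingly: the (unique) sorted list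
   r with char_poly M = prod_(x <- r) ('X - x).  Exists for real symmetric M. *)
Definition spectrum (n : nat) (M : 'M[R]_n) : seq R :=
  xget [::] [set r : seq R | sorted <=%R r /\
                              char_poly M = \prod_(x <- r) ('X - x%:P)].

Definition lambda_min (n : nat) (M : 'M[R]_n) : R := head 0 (spectrum M).
Definition lambda_max (n : nat) (M : 'M[R]_n) : R := last 0 (spectrum M).
Definition lambda2 (n : nat) (M : 'M[R]_n) : R := nth 0 (spectrum M) 1.

Definition undirected_graph (N : nat) (adj : rel 'I_N) : Prop :=
  (forall i j, adj i j = adj j i) /\ (forall i, ~~ adj i i).
Definition connected_graph (N : nat) (adj : rel 'I_N) : Prop :=
  forall i j, connect adj i j.

Definition degree (N : nat) (adj : rel 'I_N) (i : 'I_N) : nat :=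
  #|[set j | adj i j]|.

Definition laplacian (N : nat) (adj : rel 'I_N) : 'M[R]_N :=
  \matrix_(i, j) ((if i == j then (degree adj i)%:R else 0) - (adj i j)%:R).

Definition lambda0 (n N s : nat) (C : 'I_N -> 'rV[R]_n) : R :=
  inf [set lambda_min (\sum_(i in J) ((C i)^T *m C i))
      | J in [set J : {set 'I_N} | #|J| = (N - s)%N]].

Definition gammaL (N : nat) (adj : rel 'I_N) : R :=
  (lambda_max (laplacian adj) - lambda2 (laplacian adj)) /
  (lambda_max (laplacian adj) + lambda2 (laplacian adj)).

Definition p0 (N : nat) (g normA beta : R) (L : nat) : R :=
  Num.sqrt N%:R * beta * g ^+ L / (1 - normA * g ^+ L).

Definition kstar (N : nat) (g normA beta : R) (L : nat) (bw bv rho : R) : R :=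
  Num.min 1 (beta / (normA * (p0 N g normA beta L + rho) + bw + bv)).

Definition Ffun (N : nat) (g normA beta : R) (L : nat) (bw bv lam0 rho : R) : R :=
  normA * (1 - kstar N g normA beta L bw bv rho / N%:R * lam0).

Definition q0 (N s : nat) (g normA beta : R) (L : nat) (bw bv : R) : R :=
  (N%:R - s%:R) / N%:R * (bw + bv + normA * p0 N g normA beta L) + bw
  + s%:R * beta / N%:R.

End Defs.

(* Main.v *)
Require Import Defs.
From HB Require Import structures.
From mathcomp Require Import all_boot all_order all_algebra.
From mathcomp Require Import all_classical all_reals.
From mathcomp Require Import exp.
From mathcomp Require Import ring lra.
Import Order.TTheory GRing.Theory Num.Theory.
Local Open Scope ring_scope.
Section Spec.
Variable (R : realType) (N' : nat) (adj : rel 'I_N'.+1).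
Hypothesis (Hsym : forall i j, adj i j = adj j i).

Local Notation Lap := (laplacian R adj).
Local Notation w i j := ((adj i j)%:R : R).

Lemma degreeE i : (degree adj i)%:R = \sum_j w i j :> R.
Proof.
have -> : degree adj i = #|[pred j | adj i j]|.
  apply: eq_card => j; rewrite [RHS]inE /=; apply/idP/idP; rewrite in_setE; done.
rewrite -sum1_card natr_sum big_mkcond /=.
by apply: eq_bigr => j _; rewrite inE; case: (adj i j).
Qed.

Lemma Lap_rowsum i : \sum_j Lap i j = 0.
Proof.
rewrite /laplacian.
under eq_bigr do rewrite mxE.
rewrite sumrB -big_mkcond /= (big_pred1 i) ?degreeE ?subrr //.
Qed.

Definition qf (M : 'M[R]_N'.+1) (v : 'rV[R]_N'.+1) :=
  \sum_i \sum_j v 0 i * M i j * v 0 j.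

Lemma eig_qf M v a : v *m M = a *: v -> qf M v = a * \sum_j v 0 j ^+ 2.
Proof.
move=> H; rewrite /qf exchange_big big_distrr /=; apply: eq_bigr => j _.
rewrite -big_distrl /=.
have := congr1 (fun m : 'rV_ _ => m 0 j) H; rewrite !mxE => ->.
by rewrite expr2 mulrA.
Qed.

Lemma lap_qf v :
  qf Lap v *+ 2 = \sum_i \sum_j w i j * (v 0 i - v 0 j) ^+ 2.
Proof.
set S1 := \sum_i \sum_j w i j * v 0 i ^+ 2.
set S2 := \sum_i \sum_j w i j * (v 0 i * v 0 j).
have E1 : qf Lap v = S1 - S2.
  rewrite /qf /S1 /S2 -sumrB; apply: eq_bigr => i _.
  rewrite -sumrB.
  under eq_bigr do rewrite mxE.
  have -> : \sum_j v 0 i * ((if i == j then (degree adj i)%:R else 0) - w i j) * v 0 j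
     = (degree adj i)%:R * v 0 i ^+ 2 - \sum_j w i j * (v 0 i * v 0 j).
    rewrite -[X in X - _](_ : \sum_j (if i == j then (degree adj i)%:R * v 0 i ^+ 2 else 0) = _); last first.
      by rewrite -big_mkcond /= (big_pred1 i) // => j; rewrite /= eq_sym.
    rewrite -sumrB; apply: eq_bigr => j _.
    by case: eqP => [->|_]; ring.
  by rewrite sumrB degreeE big_distrl.
have E2 : \sum_i \sum_j w i j * v 0 j ^+ 2 = S1.
  rewrite exchange_big /S1; apply: eq_bigr => i _; apply: eq_bigr => j _.
  by rewrite Hsym.
have E3 : \sum_i \sum_j w i j * (v 0 i - v 0 j) ^+ 2 =
   S1 + \sum_i \sum_j w i j * v 0 j ^+ 2 - S2 *+ 2.
  rewrite /S1 /S2 -!sumrMnl -!big_split -sumrB; apply: eq_bigr => i _.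
  rewrite -!sumrMnl -!big_split -sumrB; apply: eq_bigr => j _ /=.
  ring.
by rewrite E3 E2 E1; ring.
Qed.

Lemma lap_qf_ge0 v : 0 <= qf Lap v.
Proof.
have : 0 <= qf Lap v *+ 2.
  rewrite lap_qf; apply: sumr_ge0 => i _; apply: sumr_ge0 => j _.
  by apply: mulr_ge0; [exact: ler0n | exact: sqr_ge0].
by rewrite pmulrn_lge0.
Qed.

Lemma Lap_eig_ge0 a : root (char_poly Lap) a -> 0 <= a.
Proof.
rewrite -eigenvalue_root_char => /eigenvalueP [v Hv vN0].
have Hq := eig_qf _ _ _ Hv.
have Hs : 0 < \sum_j v 0 j ^+ 2.
  rewrite lt_def sumr_ge0 ?andbT => [|j _]; last exact: sqr_ge0.
  apply/negP => /eqP /psumr_eq0P H.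
  move/eqP: vN0; apply; apply/rowP => j; rewrite mxE.
  by apply/eqP; rewrite -sqrf_eq0; apply/eqP; apply: H => // k _; exact: sqr_ge0.
have := lap_qf_ge0 v; rewrite Hq.
by rewrite pmulr_lge0.
Qed.


Local Notation J := (const_mx 1 : 'M[R]_N'.+1).

Lemma qfJ v : qf (Lap + J) v = qf Lap v + (\sum_i v 0 i) ^+ 2.
Proof.
rewrite /qf expr2 big_distrl -big_split /=; apply: eq_bigr => i _.
rewrite big_distrr -big_split /=; apply: eq_bigr => j _.
by rewrite !mxE; ring.
Qed.

Definition Pm : 'M[{poly R}]_N'.+1 :=
  \matrix_(i, j) (if j == ord0 then 1 else (i == j)%:R).
Definition Um : 'M[{poly R}]_N'.+1 :=
  \matrix_(i, j) (if (i == ord0) && (j != ord0) then -1 else (i == j)%:R).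

Lemma det_Pm : \det Pm = 1.
Proof.
rewrite det_trig; last first.
  apply/is_trig_mxP => i j lij; rewrite mxE.
  have -> : (j == ord0) = false by apply/negbTE; rewrite -val_eqE /=; case: (nat_of_ord j) lij.
  by have -> : (i == j) = false by apply/negbTE; rewrite -val_eqE /= neq_ltn lij.
by rewrite big1 // => i _; rewrite mxE eqxx; case: ifP.
Qed.

Lemma det_Um : \det Um = 1.
Proof.
rewrite -det_tr det_trig; last first.
  apply/is_trig_mxP => i j lij; rewrite !mxE.
  have -> : (j == ord0) = false by apply/negbTE; rewrite -val_eqE /=; case: (nat_of_ord j) lij.
  by have -> : (j == i) = false by apply/negbTE; rewrite -val_eqE /= neq_ltn lij orbT.
by rewrite big1 // => i _; rewrite !mxE eqxx; case: (i == ord0); rewrite /= ?andbF.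
Qed.

Lemma charE : exists D : {poly R},
  char_poly Lap = D * 'X /\ char_poly (Lap + J) = D * ('X - (N'.+1)%:R%:P).
Proof.
set Lp := char_poly_mx Lap.
set Q : 'M[{poly R}]_N'.+1 := \matrix_(i, j) (if j == ord0 then 1 else Lp i j).
exists (\det Q).
have sumdelta (F : 'I_N'.+1 -> {poly R}) j : \sum_k F k * (k == j)%:R = F j.
  rewrite (bigD1 j) //= eqxx mulr1 big1 ?addr0 // => k /negbTE ->.
  by rewrite mulr0.
have LpE i k : Lp i k = 'X *+ (i == k) - (Lap i k)%:P by rewrite !mxE.
have rowLp i : \sum_k Lp i k = 'X.
  under eq_bigr do rewrite LpE.
  rewrite sumrB (bigD1 i) //= eqxx big1 ?addr0 => [|k kn]; last by rewrite eq_sym (negbTE kn).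
  by rewrite -rmorph_sum Lap_rowsum subr0 mulr1n.
have PmE k j : Pm k j = if j == ord0 then 1 else (k == j)%:R by rewrite mxE.
have UmE k j : Um k j = if (k == ord0) && (j != ord0) then -1 else (k == j)%:R by rewrite mxE.
have QE k j : Q k j = if j == ord0 then 1 else Lp k j by rewrite mxE.
have dE (f : 'I_N'.+1 -> {poly R}) (M : 'M[{poly R}]_N'.+1) i j :
   (M *m diag_mx (\row_j f j)) i j = M i j * f j by rewrite mul_mx_diag !mxE.
split.
  have -> : \det Q * 'X = \det (Q *m diag_mx (\row_j (if j == ord0 then 'X else 1))).
    rewrite det_mulmx det_diag (bigD1 ord0) //= big1 ?mxE ?eqxx ?mulr1 // => j /negbTE.
    by rewrite mxE => ->.
  have -> : char_poly Lap = \det (Lp *m Pm) by rewrite det_mulmx det_Pm mulr1.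
  congr (\det _).
  apply/matrixP => i j; rewrite dE [LHS]mxE QE.
  case: ifP => [/eqP ->|jn0].
    under eq_bigr do rewrite PmE eqxx mulr1.
    by rewrite rowLp mul1r.
  under eq_bigr do rewrite PmE jn0.
  by rewrite sumdelta mulr1.
set Lp2 := char_poly_mx (Lap + J).
have Lp2E i k : Lp2 i k = Lp i k - 1 by rewrite !mxE rmorphD /= opprD addrA.
have -> : \det Q * ('X - (N'.+1)%:R%:P) =
   \det (Q *m Um *m diag_mx (\row_j (if j == ord0 then 'X - (N'.+1)%:R%:P else 1))).
  rewrite !det_mulmx det_Um mulr1 det_diag (bigD1 ord0) //= big1 ?mxE ?eqxx ?mulr1 // => j /negbTE.
  by rewrite mxE => ->.
have -> : char_poly (Lap + J) = \det (Lp2 *m Pm) by rewrite det_mulmx det_Pm mulr1.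
congr (\det _).
apply/matrixP => i j; rewrite dE [LHS]mxE [(Q *m Um) i j]mxE.
case: ifP => [/eqP ->|jn0].
  under eq_bigr do rewrite PmE eqxx mulr1 Lp2E.
  rewrite sumrB rowLp sumr_const card_ord.
  rewrite (bigD1 ord0) //= big1 => [|k kn0]; last by rewrite UmE (negbTE kn0) /= ?eqxx mulr0.
  by rewrite QE UmE !eqxx /= addr0 !mul1r polyC_natr.
under eq_bigr do rewrite PmE jn0.
rewrite sumdelta mulr1 Lp2E (bigD1 ord0) //= QE UmE eqxx jn0 /= mul1r.
rewrite (bigD1 j) //=; last by rewrite jn0.
rewrite QE UmE jn0 eqxx /= mulr1 big1 ?addr0 => [|k /andP [kn0 kj]]; first by rewrite addrC.
by rewrite UmE (negbTE kn0) /= (negbTE kj) mulr0.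
Qed.


Hypothesis Hconn : forall i j, connect adj i j.
Hypothesis HN : (0 < N')%N.

Lemma LapJ_noroot0 : ~~ root (char_poly (Lap + J)) 0.
Proof.
apply/negP; rewrite -eigenvalue_root_char => /eigenvalueP [v Hv vN0].
have Hq := eig_qf _ _ _ Hv; rewrite mul0r qfJ in Hq.
have q0 := lap_qf_ge0 v.
have sq := sqr_ge0 (\sum_i v 0 i).
have s0 : (\sum_i v 0 i) ^+ 2 = 0 by lra.
have qz : qf Lap v = 0 by lra.
have H2 := lap_qf v; rewrite qz mul0rn in H2.
have Hedge i j : adj i j -> v 0 i = v 0 j.
  move=> aij.
  have /psumr_eq0P Hi := esym H2.
  have /psumr_eq0P Hij : \sum_j (adj i j)%:R * (v 0 i - v 0 j) ^+ 2 = 0.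
    apply: Hi => // k _; apply: sumr_ge0 => l _; apply: mulr_ge0; [exact: ler0n | exact: sqr_ge0].
  have := Hij (fun l _ => mulr_ge0 (ler0n _ _) (sqr_ge0 _)) j isT.
  rewrite aij mul1r => /eqP; rewrite sqrf_eq0 subr_eq0 => /eqP //.
have Hall j : v 0 j = v 0 ord0.
  have Hc : closed adj [pred k | v 0 k == v 0 ord0].
    by move=> x y /Hedge exy; rewrite !inE exy.
  by have := closed_connect Hc (Hconn ord0 j); rewrite !inE eqxx => /esym/eqP.
have v00 : v 0 ord0 = 0.
  move: s0; under eq_bigr do rewrite Hall.
  rewrite sumr_const card_ord => /eqP; rewrite sqrf_eq0 -mulr_natr mulf_eq0 pnatr_eq0 orbF.
  by move/eqP.
move/eqP: vN0; apply; apply/rowP => j; rewrite mxE.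
by rewrite Hall v00.
Qed.



Lemma gamma_range : 0 <= gammaL R adj < 1.
Proof.
rewrite /gammaL /lambda_max /lambda2 /spectrum.
case: xgetP => [r _ [sr Hr] | _]; last by rewrite /= subrr addr0 mul0r lexx ltr01.
have Hsz : size r = N'.+1.
  have := size_char_poly Lap; rewrite Hr size_prod_XsubC.
  by case.
have Hge0 x : x \in r -> 0 <= x.
  by move=> xr; apply: Lap_eig_ge0; rewrite Hr root_prod_XsubC.
case: r sr Hr Hsz Hge0 => [//|r0 [|r1 rest]] sr Hr Hsz Hge0.
  by move: Hsz HN => [<-].
have r01 : r0 <= r1 by case/andP: sr.
have r1pos : 0 < r1.
  rewrite lt_def Hge0 ?andbT; last by rewrite !inE eqxx orbT.
  apply/negP => /eqP r10.
  have r00 : r0 = 0.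
    by have := Hge0 r0 (mem_head _ _); lra.
  have [D [HD HDJ]] := charE.
  move: Hr; rewrite !big_cons r00 r10 subr0 HD => Hr.
  have HD' : D = 'X * \prod_(x <- rest) ('X - x%:P).
    apply: (mulIf (x:='X)); first by rewrite polyX_eq0.
    by rewrite Hr ?polyC0 ?subr0; ring.
  move: LapJ_noroot0; rewrite HDJ HD' /root !hornerE.
  by rewrite eqxx.
have rl : r1 <= last r1 rest.
  have := mem_last r1 rest; rewrite inE => /orP [/eqP -> //|].
  move: sr => /= /andP [_ /(order_path_min le_trans) /allP]; apply.
have -> : last 0 [:: r0, r1 & rest] = last r1 rest by [].
have -> : [:: r0, r1 & rest]`_1 = r1 by [].
have lpos : 0 < last r1 rest + r1 by lra.
rewrite divr_ge0 ?(ltW lpos) ?subr_ge0 //= ltr_pdivrMr // mul1r.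
lra.
Qed.

End Spec.
Lemma arith1 {R : realFieldType} (Nr sr lam a p b eta bw bv k : R) :
 0 < Nr -> 0 <= sr <= Nr -> lam <= sr -> 1 < a -> 0 <= p -> 0 < b -> 0 < eta ->
 0 <= bw -> 0 <= bv ->
 k = Num.min 1 (b / (a * (p+eta)+bw+bv)) ->
 (Nr - sr)/Nr * (bw+bv+a * p) + bw + sr*b/Nr <= eta * (1 - a * (1 - k/Nr*lam)) -> False.
Proof.
move=> N0 /andP[s0 sN] ls a1 p0 b0 e0 bw0 bv0 kE H.
set D := a * (p+eta)+bw+bv in kE.
have D0 : 0 < D by rewrite /D; nra.
have aeD : a * eta <= D by rewrite /D; nra.
have kb : k <= b / D by rewrite kE ge_min lexx orbT.
have k0 : 0 <= k by rewrite kE le_min ler01 divr_ge0 // ltW.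
have T : a * eta * k * lam <= b * sr.
  case: (lerP 0 lam) => l0.
    have : a * eta * k <= b.
      apply: (le_trans (y := a * eta * (b / D))).
        by rewrite ler_pM2l // mulr_gt0 // (lt_trans ltr01).
      by rewrite mulrA ler_pdivrMr // mulrC ler_pM2l //.
    nra.
  have : 0 <= a * eta * k by rewrite mulr_ge0 // mulr_ge0 // ltW // (lt_trans ltr01).
  nra.
have E : eta * (1 - a * (1 - k/Nr*lam)) = eta * (1-a) + (a*eta*k*lam)/Nr by ring.
have T' : (a*eta*k*lam)/Nr <= sr*b/Nr.
  by rewrite ler_pM2r ?invr_gt0 // [sr * b]mulrC.
have Q : 0 <= (Nr - sr)/Nr * (bw+bv+a * p).
  apply: mulr_ge0; first by apply: divr_ge0; lra.
  nra.
nra.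
Qed.

Lemma arith2 {R : realFieldType} (Nr sr lam a p bw bv : R) :
 let tN := (lam - sr) / Nr in
 let K := (lam + Nr - sr) / Nr in
 let d := tN / (4 * K) in
 let b := 4 * ((bw + bv) * K + bw) / tN + 2 * (bw + bv) + 1 in
 let c := a * p + bw + bv in
 let eta := (b - c) / a in
 0 < Nr -> 0 <= sr <= Nr -> sr < lam -> 1 <= a -> a - 1 <= tN / 2 ->
 0 <= p -> a * p <= b * d -> 0 <= bw -> 0 <= bv ->
 [/\ 0 < b, 0 < eta, a * (p + eta) + bw + bv = b &
 (Nr - sr)/Nr * (bw+bv+a * p) + bw + sr*b/Nr <= eta * (1 - a * (1 - 1/Nr*lam))].
Proof.
move=> tN K d b c eta N0 /andP[s0 sN] sl a1 aeps p0 apd bw0 bv0.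
have tN0 : 0 < tN by rewrite /tN divr_gt0 // subr_gt0.
have KE : K = tN + 1 by rewrite /K /tN; field; rewrite gt_eqF.
have K1 : 1 <= K by rewrite KE; lra.
have dK : d * K = tN / 4.
  by rewrite /d; field; rewrite KE gt_eqF //; lra.
have d14 : d <= 1/4.
  rewrite /d ler_pdivrMr; last by lra.
  rewrite KE; lra.
have d0 : 0 <= d by rewrite /d divr_ge0 //; lra.
have X0 : 0 <= (bw + bv) * K + bw by nra.
have btN : b * tN = 4 * ((bw + bv) * K + bw) + (2 * (bw + bv) + 1) * tN.
  by rewrite /b; field; rewrite gt_eqF.
have hb : 2 * (bw + bv) + 1 <= b.
  have : 0 <= 4 * ((bw + bv) * K + bw) / tN by apply: divr_ge0; lra.
  rewrite /b; lra.
have b0 : 0 < b by lra.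
have bd : b * d <= b / 4.
  rewrite -subr_ge0; have -> : b / 4 - b * d = b * (1/4 - d) by ring.
  by apply: mulr_ge0; lra.
have cb : c < b by rewrite /c; lra.
have a0 : 0 < a by lra.
have eta0 : 0 < eta by rewrite /eta divr_gt0 // subr_gt0.
have aeta : a * eta = b - c by rewrite /eta; field; rewrite gt_eqF.
split => //.
  by rewrite mulrDr aeta /c; ring.
have E : eta * (1 - a * (1 - 1/Nr*lam)) -
   ((Nr - sr)/Nr * (bw+bv+a * p) + bw + sr*b/Nr) = eta * (1 - a) + b * tN - c * K - bw.
  by rewrite /eta /tN /K /c; field; apply/andP; split; rewrite gt_eqF.
have Z : eta * (1 - a) >= - (b * tN / 2).
  have : eta <= b.
    rewrite /eta ler_pdivrMr //.
    have : 0 <= c by rewrite /c; nra.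
    nra.
  have : (a - 1) * b <= tN / 2 * b by rewrite ler_pM2r.
  nra.
have cK : c * K <= b * tN / 4 + (bw + bv) * K.
  rewrite /c.
  have : a * p * K <= b * d * K by rewrite ler_pM2r //; lra.
  rewrite -[b * d * K]mulrA dK.
  nra.
have : 0 <= eta * (1 - a) + b * tN - c * K - bw by nra.
rewrite -E subr_ge0 //.
Qed.

Lemma pow_cond {R : realType} (g a : R) (L : nat) : 0 <= g < 1 -> 1 <= a ->
  ln a / ln g^-1 < L%:R -> a * g ^+ L < 1.
Proof.
move=> /andP [g0 g1] a1 HL.
have [g00|gpos] := eqVneq g 0.
  move: HL; rewrite g00 invr0 (ln0 (lexx 0)) invr0 mulr0 ltr0n expr0n.
  by case: L => // L _ /=; rewrite mulr0 ltr01.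
have gp : 0 < g by rewrite lt_def gpos g0.
have lg : ln g < 0 by apply: ln_lt0; rewrite gp g1.
have a0 : 0 < a by lra.
rewrite lnV ?posrE // ltr_pdivrMr ?oppr_gt0 // in HL.
have : ln (a * g ^+ L) < 0.
  rewrite lnM ?posrE ?exprn_gt0 // lnXn //.
  by rewrite -mulr_natr; lra.
apply: contraTT; rewrite -!leNgt => H; apply: ln_ge0.
by [].
Qed.

Lemma pow_small {R : realType} (g a e : R) : 0 <= g < 1 -> 1 <= a -> 0 < e ->
  exists L : nat, ln a / ln g^-1 < L%:R /\ g ^+ L <= e.
Proof.
move=> /andP [g0 g1] a1 e0.
have [->|gpos] := eqVneq g 0.
  exists 1%N; rewrite invr0 (ln0 (lexx 0)) invr0 mulr0 ltr01 expr1; split => //.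
  exact: ltW.
have gp : 0 < g by rewrite lt_def gpos g0.
have lg : ln g < 0 by apply: ln_lt0; rewrite gp g1.
set x := Num.max (ln a / ln g^-1) (ln e / ln g).
exists (Num.truncn x).+1.
have Hx := truncnS_gt x.
have Hx1 : ln a / ln g^-1 <= x by rewrite le_max lexx.
have Hx2 : ln e / ln g <= x by rewrite le_max lexx orbT.
split; first exact: le_lt_trans Hx1 Hx.
have : ln (g ^+ (Num.truncn x).+1) < ln e.
  rewrite lnXn // -mulr_natr mulrC.
  have := le_lt_trans Hx2 Hx; rewrite ltr_ndivrMr //.
by rewrite ltr_ln ?posrE ?exprn_gt0 // => /ltW.
Qed.

Lemma enormZ {R : realType} m k (a : R) (x : 'M[R]_(m,k)) :
  enorm (a *: x) = `|a| * enorm x.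
Proof.
rewrite /enorm -sqrtr_sqr -sqrtrM ?sqr_ge0 //; congr Num.sqrt.
rewrite big_distrr; apply: eq_bigr => i _; rewrite big_distrr; apply: eq_bigr => j _.
by rewrite mxE exprMn.
Qed.

Lemma enorm_tr {R : realType} m k (x : 'M[R]_(m,k)) : enorm x^T = enorm x.
Proof.
rewrite /enorm exchange_big; congr Num.sqrt; apply: eq_bigr => i _.
by apply: eq_bigr => j _; rewrite mxE.
Qed.

Lemma opnorm_scal {R : realType} n (a : R) (x0 : 'cV[R]_n) :
  enorm x0 = 1 -> 0 <= a -> opnorm (a *: 1%:M : 'M[R]_n) = a.
Proof.
move=> x01 a0; rewrite /opnorm -[RHS](sup1 a); congr sup.
apply/seteqP; split => y /=.
  case=> x /= xn <-; rewrite -scalemxAl mul1mx enormZ xn mulr1.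
  by rewrite ger0_norm.
move=> ->; exists x0 => //.
by rewrite -scalemxAl mul1mx enormZ x01 mulr1 ger0_norm.
Qed.

Lemma arith3 {R : realFieldType} (sN b gL a d : R) : 0 < sN -> 0 < b -> 0 <= gL ->
  gL <= 1/4 -> gL <= d / (4 * sN) -> 1 <= a -> a < 2 ->
  0 <= sN * b * gL / (1 - a * gL) /\ a * (sN * b * gL / (1 - a * gL)) <= b * d.
Proof.
move=> s0 b0 g0 g14 gd a1 a2.
have Y : 1/2 <= 1 - a * gL by nra.
have X0 : 0 <= sN * b * gL by rewrite mulr_ge0 // mulr_ge0 // ltW.
have Y0 : 0 < 1 - a * gL by lra.
have p0 : 0 <= sN * b * gL / (1 - a * gL) by rewrite divr_ge0 // ltW.
split => //.
have p2 : sN * b * gL / (1 - a * gL) <= 2 * (sN * b * gL).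
  rewrite ler_pdivrMr //; nra.
have sg : sN * gL <= d / 4.
  move: gd; rewrite ler_pdivlMr; last by lra.
  by move=> h; lra.
have : a * (sN * b * gL / (1 - a * gL)) <= 2 * (sN * b * gL / (1 - a * gL)).
  have h2a : 0 <= 2 - a by lra.
  by have := mulr_ge0 h2a p0; rewrite mulrBl; lra.
nra.
Qed.

Theorem theorem2 (R : realType) (n N : nat) (adj : rel 'I_N)
  (C : 'I_N -> 'rV[R]_n) (s : nat) (bw bv : R) :
  (1 < N)%N ->
  undirected_graph adj -> connected_graph adj ->
  (forall i, enorm (C i) = 1) ->
  (s <= N)%N ->
  0 <= bw -> 0 <= bv ->
  (exists2 eps : R, 0 < eps &
     forall A : 'M[R]_n, 1 <= opnorm A < 1 + eps ->
       exists beta : R, exists eta0 : R, exists L : nat,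
         [/\ 0 < beta, 0 < eta0,
             ln (opnorm A) / ln ((gammaL R adj)^-1) < L%:R &
             q0 N s (gammaL R adj) (opnorm A) beta L bw bv <=
             eta0 * (1 - Ffun N (gammaL R adj) (opnorm A) beta L bw bv
                                (lambda0 s C) eta0)])
  <-> s%:R < lambda0 s C.
Proof.
move=> N1 [Hsym _] Hconn HC sN bw0 bv0.
case: N adj C N1 HC sN Hsym Hconn => [//|N'] adj C N1 HC sN Hsym Hconn.
have gr : 0 <= gammaL R adj < 1 by apply: gamma_range.
have x0n : enorm (C ord0)^T = 1 by rewrite enorm_tr HC.
set g := gammaL R adj in gr *.
set lam := lambda0 s C.
have Nr0 : 0 < N'.+1%:R :> R by rewrite ltr0n.
have sNr : s%:R <= N'.+1%:R :> R by rewrite ler_nat.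
have s0 : 0 <= s%:R :> R by rewrite ler0n.
split.
  case=> eps eps0 H; rewrite ltNge; apply/negP => Hle.
  set a := 1 + eps / 2.
  have a1 : 1 < a by rewrite /a; lra.
  have Ha : opnorm (a *: 1%:M : 'M[R]_n) = a by apply: (@opnorm_scal _ n a (C ord0)^T x0n); lra.
  have := H (a *: 1%:M); rewrite Ha.
  case=> [|b [eta [L [b0 e0 HL Hq]]]]; first by apply/andP; split; rewrite /a; lra.
  have ag := @pow_cond _ g a L gr (ltW a1) HL.
  have hp0 : 0 <= p0 N'.+1 g a b L.
    rewrite /p0 divr_ge0 ?subr_ge0 ?(ltW ag) //.
    by rewrite mulr_ge0 ?exprn_ge0 ?(andP gr).1 // mulr_ge0 ?sqrtr_ge0 // ltW.
  move: Hq; rewrite /q0 /Ffun.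
  apply: (@arith1 _ N'.+1%:R s%:R lam a (p0 N'.+1 g a b L) b eta bw bv (kstar N'.+1 g a b L bw bv eta)) => //.
  - by rewrite s0 sNr.
move=> Hlt.
have t0 : 0 < (lam - s%:R) / N'.+1%:R by rewrite divr_gt0 // subr_gt0.
set eps := Num.min 1 ((lam - s%:R) / N'.+1%:R / 2).
have eps0 : 0 < eps by rewrite lt_min ltr01 /= divr_gt0.
exists eps => // A /andP [a1 aeps].
set a := opnorm A in a1 aeps *.
set tN := (lam - s%:R) / N'.+1%:R in t0 eps eps0 aeps *.
set K := (lam + N'.+1%:R - s%:R) / N'.+1%:R.
have K0 : 0 < K by rewrite /K divr_gt0 //; lra.
set d := tN / (4 * K).
have d0 : 0 < d by rewrite /d divr_gt0 //; lra.
set b := 4 * ((bw + bv) * K + bw) / tN + 2 * (bw + bv) + 1.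
have sN0 : 0 < Num.sqrt (N'.+1%:R : R) by rewrite sqrtr_gt0.
set e' := Num.min (1/4) (d / (4 * Num.sqrt N'.+1%:R)).
have e'0 : 0 < e' by rewrite lt_min; apply/andP; split; [lra | rewrite divr_gt0 //; lra].
have [L [HL gL]] := @pow_small _ g a e' gr a1 e'0.
have epsle1 : eps <= 1 by rewrite ge_min lexx.
have epsle2 : eps <= tN / 2 by rewrite ge_min lexx orbT.
have b0 : 0 < b.
  have : 0 <= 4 * ((bw + bv) * K + bw) / tN.
    by apply: divr_ge0; [apply: mulr_ge0; [lra | apply: addr_ge0 => //; apply: mulr_ge0; lra] | lra].
  rewrite /b; lra.
have [hp0 apd] : 0 <= p0 N'.+1 g a b L /\ a * p0 N'.+1 g a b L <= b * d.
  apply: arith3 => //; first by rewrite exprn_ge0 // (andP gr).1.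
  - by apply: (le_trans gL); rewrite ge_min lexx.
  - by apply: (le_trans gL); rewrite ge_min lexx orbT.
  - lra.
have := @arith2 R N'.+1%:R s%:R lam a (p0 N'.+1 g a b L) bw bv Nr0.
rewrite s0 sNr /= => /(_ isT); rewrite -/tN -/K -/d -/b.
move=> /(_ Hlt a1 _ hp0 apd bw0 bv0).
case=> [|Hb Heta Hsum Hineq]; first lra.
set eta := (b - _) / a in Heta Hsum Hineq.
exists b, eta, L; split => //.
rewrite /Ffun /kstar Hsum divff ?gt_eqF // minxx.
exact: Hineq.
Qed.
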